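(* Let $H$ be the Torricelli trumpet of parameter $\beta>0$ (surface of revolution of $r(z)=z^{-\beta}$, $z\ge z_0$, with $r_0=r(z_0)$), with rotation function $\Delta\theta(\varphi_0)$. Let $\kappa(\varphi_0)=\Delta\theta'(\varphi_0)$ and $\omega(\varphi_0)=\frac{2+\kappa(\varphi_0)}{\cos\varphi_0}$. Then: 1. $\kappa$ is smooth on $(-\pi/2,\pi/2)\setminus\{0\}$, and for all such $\varphi_0$ $$\kappa(\varphi_0)\le-2\sqrt{1+\beta^{-2}r_0^{-2(1+\beta)/\beta}}<-2.$$ In particular $\kappa(\varphi_0)\notin[-2,0]$, and hence $\omega<0$. 2. $\kappa(\varphi_0)\to-\infty$ as $\varphi_0\to0$, and $\kappa(\varphi_0)\to-2\sqrt{1+\beta^{-2}r_0^{-2(1+\beta)/\beta}}$ as $\varphi_0\to\pm\pi/2$. 3. $|\kappa'(\varphi_0)|=O(|2+\kappa(\varphi_0)|^3)$ as $\varphi_0\to0$. 4. $\omega$ is monotone on one-sided neighborhoods $[-\varepsilon,0)$ and $(0,\varepsilon]$ of $0$, for some $\varepsilon>0$.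
   Context: The trumpet is the surface $(r(z)\cos\theta,r(z)\sin\theta,z)$, $z\ge z_0$. A unit-speed geodesic entering through the boundary circle at angular position $\theta_0$ with angle $\varphi_0$ to the inward meridian exits at position $\theta_0+\Delta\theta(\varphi_0)$. The rotation function $\Delta\theta(\varphi_0)=2\operatorname{sgn}(\varphi_0)\int_{|\sin\varphi_0|}^1\sqrt{\frac{1+r'(z(r_0|\sin\varphi_0|/u))^{-2}}{1-u^2}}\,du$ is odd in $\varphi_0$. *)

(* Defs.v *)
From Stdlib Require Import Reals.
From Coquelicot Require Import Coquelicot.
Open Scope R_scope.

(* Generic rotation function of a trumpet with profile r, given
   dr = r' (derivative of the profile) and zinv = z(.) the inverse of r,
   and r0 = r(z0).  The improper integral on [|sin phi|, 1) is Coquelicot's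
   RInt_gen with the filter at_left 1. *)
Definition rotation (dr zinv : R -> R) (r0 phi : R) : R :=
  2 * sign phi *
  RInt_gen
    (fun u => sqrt ((1 + / (dr (zinv (r0 * Rabs (sin phi) / u))) ^ 2) / (1 - u ^ 2)))
    (at_point (Rabs (sin phi))) (at_left 1).

Definition torr_r (beta z : R) : R := Rpower z (- beta).
Definition torr_zinv (beta rho : R) : R := Rpower rho (- / beta).

Definition torr_dtheta (beta z0 : R) : R -> R :=
  rotation (Derive (torr_r beta)) (torr_zinv beta) (torr_r beta z0).

Definition torr_kappa (beta z0 : R) : R -> R := Derive (torr_dtheta beta z0).

Definition torr_omega (beta z0 : R) (phi : R) : R :=
  (2 + torr_kappa beta z0 phi) / cos phi.

(* Main.v *)
Require Import Defs.
From Stdlib Require Import Reals Lra.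
From Coquelicot Require Import Coquelicot.
Open Scope R_scope.

Inductive expr : Type :=
 | ECst (c : R) | EX | ET | EAdd (e1 e2 : expr) | EMul (e1 e2 : expr)
 | EInv (e : expr) | ESqrt (e : expr) | ESin (e : expr) | ECos (e : expr) | EPow (e : expr) (c : R).

Fixpoint ev (e : expr) (x t : R) : R :=
  match e with
  | ECst c => c | EX => x | ET => t
  | EAdd a b => ev a x t + ev b x t
  | EMul a b => ev a x t * ev b x t
  | EInv a => / ev a x t
  | ESqrt a => sqrt (ev a x t)
  | ESin a => sin (ev a x t)
  | ECos a => cos (ev a x t)
  | EPow a c => Rpower (ev a x t) c
  end.

Fixpoint ok (e : expr) (x t : R) : Prop :=
  match e with
  | ECst _ | EX | ET => True
  | EAdd a b | EMul a b => ok a x t /\ ok b x t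
  | EInv a => ok a x t /\ ev a x t <> 0
  | ESqrt a | EPow a _ => ok a x t /\ 0 < ev a x t
  | ESin a | ECos a => ok a x t
  end.

Fixpoint D (e : expr) : expr :=
  match e with
  | ECst _ => ECst 0 | EX => ECst 1 | ET => ECst 0
  | EAdd a b => EAdd (D a) (D b)
  | EMul a b => EAdd (EMul (D a) b) (EMul a (D b))
  | EInv a => EMul (ECst (-1)) (EMul (D a) (EInv (EMul a a)))
  | ESqrt a => EMul (D a) (EInv (EMul (ECst 2) (ESqrt a)))
  | ESin a => EMul (D a) (ECos a)
  | ECos a => EMul (ECst (-1)) (EMul (D a) (ESin a))
  | EPow a c => EMul (ECst c) (EMul (D a) (EPow a (c - 1)))
  end.

Lemma ok_D e x t : ok e x t -> ok (D e) x t.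
Proof.
  induction e; simpl; intros;
  repeat match goal with H : _ /\ _ |- _ => destruct H end; repeat split; auto;
  try (apply Rmult_integral_contrapositive; auto);
  try (apply Rgt_not_eq; apply sqrt_lt_R0; auto).
  split; [lra| apply Rgt_not_eq; apply sqrt_lt_R0; auto].
Qed.

Lemma continuity_pt_Rpower y c : 0 < y -> continuity_pt (fun z => Rpower z c) y.
Proof.
  intros Hy. apply derivable_continuous_pt.
  exists (c * Rpower y (c - 1)). now apply derivable_pt_lim_power.
Qed.

Lemma ev_cont e x t : ok e x t -> continuity_2d_pt (ev e) x t.
Proof.
  induction e; simpl.
  - intros _. apply continuity_2d_pt_const.
  - intros _. apply continuity_2d_pt_id1.
  - intros _. apply continuity_2d_pt_id2.
  - intros [H1 H2]. apply continuity_2d_pt_plus; auto.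
  - intros [H1 H2]. apply continuity_2d_pt_mult; auto.
  - intros [H1 H2]. apply continuity_2d_pt_inv; auto.
  - intros [H1 H2]. apply continuity_1d_2d_pt_comp; auto.
    apply continuity_pt_sqrt; lra.
  - intros H1. apply continuity_1d_2d_pt_comp; auto. apply continuity_sin.
  - intros H1. apply continuity_1d_2d_pt_comp; auto. apply continuity_cos.
  - intros [H1 H2]. apply (continuity_1d_2d_pt_comp (fun z => Rpower z c)); auto.
    now apply continuity_pt_Rpower.
Qed.

Lemma cont2d_pos f x t : continuity_2d_pt f x t -> 0 < f x t ->
  locally_2d (fun u v => 0 < f u v) x t.
Proof.
  intros Hc Hp. destruct (Hc (mkposreal _ Hp)) as [d Hd].
  exists d. intros u v Hu Hv. specialize (Hd u v Hu Hv). simpl in Hd.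
  apply Rabs_def2 in Hd. lra.
Qed.

Lemma ok_loc e x t : ok e x t -> locally_2d (ok e) x t.
Proof.
  induction e; simpl.
  - intros _. apply locally_2d_forall. simpl; auto.
  - intros _. apply locally_2d_forall. simpl; auto.
  - intros _. apply locally_2d_forall. simpl; auto.
  - intros [H1 H2]. apply locally_2d_and; auto.
  - intros [H1 H2]. apply locally_2d_and; auto.
  - intros [H1 H2]. apply locally_2d_and; auto.
    apply continuity_2d_pt_neq_0; auto. now apply ev_cont.
  - intros [H1 H2]. apply locally_2d_and; auto.
    apply cont2d_pos; auto. now apply ev_cont.
  - intros H1; auto.
  - intros H1; auto.
  - intros [H1 H2]. apply locally_2d_and; auto.
    apply cont2d_pos; auto. now apply ev_cont.
Qed.

Lemma idR_plus (f g : R -> R) x a b : is_derive f x a -> is_derive g x b ->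
  is_derive (fun y => f y + g y) x (a + b).
Proof. intros Hf Hg. exact (is_derive_plus f g x a b Hf Hg). Qed.
Lemma idR_mult (f g : R -> R) x a b : is_derive f x a -> is_derive g x b ->
  is_derive (fun y => f y * g y) x (a * g x + f x * b).
Proof. intros Hf Hg. exact (is_derive_mult f g x a b Hf Hg (fun _ _ => Rmult_comm _ _)). Qed.
Lemma idR_comp (f g : R -> R) x a b : is_derive f (g x) a -> is_derive g x b ->
  is_derive (fun y => f (g y)) x (b * a).
Proof. intros Hf Hg. exact (is_derive_comp f g x a b Hf Hg). Qed.

Lemma is_derive_Rpower_comp f x l c : is_derive f x l -> 0 < f x ->
  is_derive (fun y => Rpower (f y) c) x (c * (l * Rpower (f x) (c - 1))).
Proof.
  intros Hf Hp.
  replace (c * (l * Rpower (f x) (c - 1))) with (l * (c * Rpower (f x) (c - 1))) by ring.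
  apply (idR_comp (fun z => Rpower z c) f x).
  - apply is_derive_Reals. now apply derivable_pt_lim_power.
  - exact Hf.
Qed.

Lemma ev_der e x t : ok e x t -> is_derive (fun z => ev e z t) x (ev (D e) x t).
Proof.
  induction e; simpl.
  - intros _. auto_derive; auto.
  - intros _. auto_derive; auto.
  - intros _. auto_derive; auto.
  - intros [H1 H2]. apply (idR_plus (fun z => ev e1 z t) (fun z => ev e2 z t)); auto.
  - intros [H1 H2]. apply (idR_mult (fun z => ev e1 z t) (fun z => ev e2 z t)); auto.
  - intros [H1 H2]. eapply is_derive_ext. intros; reflexivity.
    evar (l : R). replace (-1 * (ev (D e) x t * / (ev e x t * ev e x t))) with l.
    apply (is_derive_inv (fun z => ev e z t)); auto. unfold l. simpl. field. auto.
  - intros [H1 H2]. 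
    evar (l : R). replace (ev (D e) x t * / (2 * sqrt (ev e x t))) with l.
    apply (is_derive_sqrt (fun z => ev e z t)); auto. unfold l. reflexivity.
  - intros H1.
    evar (l : R). replace (ev (D e) x t * cos (ev e x t)) with l.
    apply (idR_comp sin (fun z => ev e z t)); auto. apply is_derive_sin.
    unfold l; ring.
  - intros H1.
    evar (l : R). replace (-1 * (ev (D e) x t * sin (ev e x t))) with l.
    apply (idR_comp cos (fun z => ev e z t)); auto. apply is_derive_cos.
    unfold l; ring.
  - intros [H1 H2]. apply (is_derive_Rpower_comp (fun z => ev e z t)); auto.
Qed.

Fixpoint Dn (n : nat) (e : expr) : expr := match n with O => e | S n => D (Dn n e) end.

Lemma ok_Dn n e x t : ok e x t -> ok (Dn n e) x t.
Proof. induction n; simpl; auto. intros H; apply ok_D; auto. Qed.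

Lemma cont2d_t f x t : continuity_2d_pt f x t -> continuous (fun z => f x z) t.
Proof.
  intros Hc. apply filterlim_locally. intros eps.
  destruct (Hc eps) as [d Hd]. exists d. intros y Hy.
  apply (Hd x y). rewrite Rminus_eq_0, Rabs_R0. apply cond_pos. exact Hy.
Qed.

Lemma cont2d_x f x t : continuity_2d_pt f x t -> continuous (fun z => f z t) x.
Proof.
  intros Hc. apply filterlim_locally. intros eps.
  destruct (Hc eps) as [d Hd]. exists d. intros y Hy.
  apply (Hd y t). exact Hy. rewrite Rminus_eq_0, Rabs_R0. apply cond_pos.
Qed.

Fixpoint substT (e s : expr) : expr :=
  match e with
  | ET => s
  | EAdd a b => EAdd (substT a s) (substT b s)
  | EMul a b => EMul (substT a s) (substT b s)
  | EInv a => EInv (substT a s)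
  | ESqrt a => ESqrt (substT a s)
  | ESin a => ESin (substT a s)
  | ECos a => ECos (substT a s)
  | EPow a c => EPow (substT a s) c
  | _ => e
  end.

Lemma ev_substT e s x t : ev (substT e s) x t = ev e x (ev s x t).
Proof. induction e; simpl; congruence. Qed.

Lemma ok_substT e s x t : ok s x t -> ok e x (ev s x t) -> ok (substT e s) x t.
Proof.
  intros Hs. induction e; simpl; rewrite ?ev_substT; tauto.
Qed.


Lemma ball_R (x y : R) (e : posreal) : ball x e y -> Rabs (y - x) < e.
Proof. intros H. exact H. Qed.

Lemma loc_int l r x : l < x < r -> locally x (fun y => l < y < r).
Proof.
  intros Hx. assert (Hp : 0 < Rmin (x - l) (r - x)) by (apply Rmin_pos; lra).
  exists (mkposreal _ Hp). intros y Hy. apply ball_R in Hy. simpl in Hy.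
  apply Rabs_def2 in Hy. destruct Hy as [Hy1 Hy2].
  generalize (Rmin_l (x - l) (r - x)) (Rmin_r (x - l) (r - x)). lra.
Qed.

Lemma loc2d_box l r l' r' x t : l < x < r -> l' < t < r' ->
  locally_2d (fun u v => l < u < r /\ l' < v < r') x t.
Proof.
  intros Hx Ht.
  assert (Hp : 0 < Rmin (Rmin (x - l) (r - x)) (Rmin (t - l') (r' - t)))
    by (repeat apply Rmin_pos; lra).
  exists (mkposreal _ Hp). intros u v Hu Hv. simpl in Hu, Hv.
  apply Rabs_def2 in Hu. apply Rabs_def2 in Hv.
  generalize (Rmin_l (Rmin (x - l) (r - x)) (Rmin (t - l') (r' - t)))
    (Rmin_r (Rmin (x - l) (r - x)) (Rmin (t - l') (r' - t)))
    (Rmin_l (x - l) (r - x)) (Rmin_r (x - l) (r - x))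
    (Rmin_l (t - l') (r' - t)) (Rmin_r (t - l') (r' - t)). lra.
Qed.

Lemma exR_cont (f : R -> R) a b : (forall z, Rmin a b <= z <= Rmax a b -> continuous f z) ->
  ex_RInt f a b.
Proof. intros H. apply (ex_RInt_continuous (V := R_CompleteNormedModule)). exact H. Qed.

Lemma RInt_param_der (e : expr) (l r x : R) :
  (forall y t, l < y < r -> 0 <= t <= 1 -> ok e y t) -> l < x < r ->
  is_derive (fun z => RInt (ev e z) 0 1) x (RInt (ev (D e) x) 0 1).
Proof.
  intros Hok Hx.
  assert (HD : forall y t, l < y < r -> 0 <= t <= 1 ->
            locally_2d (fun u v => Derive (fun z => ev e z v) u = ev (D e) u v) y t).
  { intros y t Hy Ht. apply locally_2d_impl with (P := ok e).
    - apply locally_2d_forall. intros u v Huv. apply is_derive_unique. now apply ev_der.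
    - apply ok_loc. auto. }
  eapply is_derive_ext. intros z. reflexivity.
  replace (RInt (ev (D e) x) 0 1) with (RInt (fun t => Derive (fun u => ev e u t) x) 0 1).
  apply (is_derive_RInt_param (fun u t => ev e u t)).
  - generalize (loc_int l r x Hx). apply filter_imp. intros y Hy t Ht.
    rewrite Rmin_left, Rmax_right in Ht by lra.
    eexists. apply ev_der. auto.
  - intros t Ht. rewrite Rmin_left, Rmax_right in Ht by lra.
    apply continuity_2d_pt_ext_loc with (f := ev (D e)).
    + apply locally_2d_impl with (P := fun u v => Derive (fun z => ev e z v) u = ev (D e) u v).
      apply locally_2d_forall. intros u v H; now rewrite H. now apply HD.
    + apply ev_cont. apply ok_D. auto.
  - generalize (loc_int l r x Hx). apply filter_imp. intros y Hy.
    apply exR_cont. intros z Hz. rewrite Rmin_left, Rmax_right in Hz by lra.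
    apply (cont2d_t (ev e)). apply ev_cont. auto.
  - apply RInt_ext. intros t Ht. rewrite Rmin_left, Rmax_right in Ht by lra.
    apply is_derive_unique. apply ev_der. apply Hok; lra.
Qed.

Lemma Dn_int (e : expr) (l r : R) :
  (forall y t, l < y < r -> 0 <= t <= 1 -> ok e y t) ->
  forall n x, l < x < r ->
  Derive_n (fun z => RInt (ev e z) 0 1) n x = RInt (ev (Dn n e) x) 0 1.
Proof.
  intros Hok n. induction n as [|n IH]; intros x Hx; simpl. reflexivity.
  rewrite (Derive_ext_loc _ (fun z => RInt (ev (Dn n e) z) 0 1)).
  - apply is_derive_unique. apply RInt_param_der with l r; auto.
    intros; apply ok_Dn; auto.
  - generalize (loc_int l r x Hx). apply filter_imp. intros y Hy. auto.
Qed.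

Lemma exDn_int (e : expr) (l r : R) :
  (forall y t, l < y < r -> 0 <= t <= 1 -> ok e y t) ->
  forall n x, l < x < r -> ex_derive_n (fun z => RInt (ev e z) 0 1) n x.
Proof.
  intros Hok n x Hx. destruct n as [|n]; simpl. exact I.
  apply ex_derive_ext_loc with (f := fun z => RInt (ev (Dn n e) z) 0 1).
  - generalize (loc_int l r x Hx). apply filter_imp. intros y Hy.
    symmetry; apply Dn_int with l r; auto.
  - eexists. apply RInt_param_der with l r; auto. intros; apply ok_Dn; auto.
Qed.

Lemma leib (e de : expr) (l r x B : R) : l < x < B -> B < r ->
  (forall u v, l < u < r -> l < v < r -> ok e u v /\ ok de u v /\ ev (D e) u v = ev de u v) ->
  is_derive (fun z => RInt (ev e z) z B) x (RInt (ev de x) x B - ev e x x).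
Proof.
  intros Hx HB Hok.
  assert (HDer : forall u v, l < u < r -> l < v < r -> Derive (fun z => ev e z v) u = ev de u v).
  { intros u v Hu Hv. destruct (Hok u v Hu Hv) as [H1 [H2 H3]]. rewrite <- H3.
    apply is_derive_unique. apply ev_der; auto. }
  assert (HC : forall u v, l < u < r -> l < v < r ->
     continuity_2d_pt (fun u v => Derive (fun z => ev e z v) u) u v).
  { intros u v Hu Hv. apply continuity_2d_pt_ext_loc with (f := ev de).
    - apply locally_2d_impl with (P := fun u v => l < u < r /\ l < v < r).
      apply locally_2d_forall. intros u' v' [H1 H2]. symmetry; auto.
      apply loc2d_box; auto.
    - apply ev_cont. apply Hok; auto. }
  assert (Hcont : forall u v, l < u < r -> l < v < r -> continuous (ev e u) v).
  { intros u v Hu Hv. apply (cont2d_t (ev e)). apply ev_cont. apply Hok; auto. }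
  set (eps := Rmin ((x - l) / 2) ((r - B) / 2)).
  assert (Heps : 0 < eps) by (apply Rmin_pos; lra).
  assert (He1 : eps <= (x - l) / 2) by apply Rmin_l.
  assert (He2 : eps <= (r - B) / 2) by apply Rmin_r.
  set (pe := mkposreal eps Heps).
  assert (Hloc : locally x (fun y => x - eps < y < x + eps)).
  { apply loc_int. lra. }
  eapply is_derive_ext. intros z; reflexivity.
  replace (RInt (ev de x) x B - ev e x x) with
    (RInt (fun t => Derive (fun u => ev e u t) x) x B + - ev e x x * 1).
  apply (is_derive_RInt_param_bound_comp_aux2 (fun u t => ev e u t) (fun z => z) B x 1).
  - generalize Hloc. apply filter_imp. intros y Hy. apply exR_cont.
    intros z Hz. rewrite Rmin_left, Rmax_right in Hz by lra. apply Hcont; lra.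
  - exists pe. generalize Hloc. apply filter_imp. intros y Hy. apply exR_cont.
    intros z Hz. simpl in Hz. rewrite Rmin_left, Rmax_right in Hz by lra. apply Hcont; lra.
  - auto_derive; auto.
  - exists pe. generalize Hloc. apply filter_imp. intros y Hy t Ht. simpl in Ht.
    assert (l < Rmin (x - pe) B) by (apply Rmin_glb_lt; simpl; lra).
    assert (Rmax (x + pe) B < r) by (apply Rmax_lub_lt; simpl; lra).
    eexists. apply ev_der. apply Hok; simpl in *; lra.
  - intros t Ht. rewrite Rmin_left, Rmax_right in Ht by lra. apply HC; lra.
  - apply locally_2d_impl with (P := fun u v => l < u < r /\ l < v < r).
    apply locally_2d_forall. intros u v [H1 H2]. apply HC; auto.
    apply loc2d_box; lra.
  - apply continuity_pt_filterlim. apply Hcont; lra.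
  - rewrite Rmult_1_r. unfold Rminus. apply Rplus_eq_compat_r. apply RInt_ext. intros t Ht.
    rewrite Rmin_left, Rmax_right in Ht by lra. apply HDer; lra.
Qed.


Lemma Rpower_m1 q c : 0 < q -> Rpower q (c - 1) = Rpower q c / q.
Proof.
  intros Hq. unfold Rminus. rewrite Rpower_plus, Rpower_Ropp, Rpower_1 by auto.
  reflexivity.
Qed.

Lemma Rpower_pos x y : 0 < Rpower x y.
Proof. unfold Rpower. apply exp_pos. Qed.

Lemma Rpower_one y : Rpower 1 y = 1.
Proof. unfold Rpower. rewrite ln_1, Rmult_0_r. apply exp_0. Qed.

Lemma sqrt_sq_eq x : 0 <= x -> sqrt x * sqrt x = x.
Proof. intros; apply sqrt_sqrt; auto. Qed.

Section Torr.
Variables beta z0 : R.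
Hypothesis hb : 0 < beta.
Hypothesis hz : 0 < z0.
Set Default Proof Using "All".

Definition r0 := torr_r beta z0.
Definition p := 2 * (1 + beta) / beta.
Definition a := / beta ^ 2 * Rpower r0 (- p).

Lemma p_gt2 : 2 < p.
Proof. unfold p. apply Rmult_lt_reg_r with beta; auto. field_simplify; lra. Qed.
Lemma a_pos : 0 < a.
Proof. unfold a. apply Rmult_lt_0_compat. apply Rinv_0_lt_compat. apply pow_lt; auto. apply Rpower_pos. Qed.

Definition eXq := EMul (ESin ET) (EInv (ESin EX)).
Definition eX := EMul (ECst a) (EPow eXq p).
Definition e1X := EAdd (ECst 1) eX.
Definition eg := ESqrt e1X.
Definition ek := EMul eX (EInv (ESqrt e1X)).
Definition el := EMul (EMul eX (EAdd (ECst 2) eX)) (EInv (EMul (EMul (ECst 2) e1X) (ESqrt e1X))).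
Definition ecot := EMul (ECos EX) (EInv (ESin EX)).
Definition edg := EMul (ECst (-(p/2))) (EMul ecot ek).
Definition edk := EMul (ECst (-p)) (EMul ecot el).

Definition Xf x t := ev eX x t.
Lemma Xf_eq x t : Xf x t = a * Rpower (sin t / sin x) p.
Proof. reflexivity. Qed.

Lemma X_pos x t : 0 < sin x -> 0 < sin t -> 0 < Xf x t.
Proof. intros. rewrite Xf_eq. apply Rmult_lt_0_compat. apply a_pos. apply Rpower_pos. Qed.

Definition box u v := 0 < sin u /\ 0 < sin v.

Lemma ok_all u v : box u v ->
  ok eg u v /\ ok ek u v /\ ok el u v /\ ok edg u v /\ ok edk u v.
Proof.
  intros [Hu Hv].
  assert (HX : 0 < Xf u v) by (apply X_pos; auto).
  assert (Hq : 0 < sin v * / sin u) by (apply Rmult_lt_0_compat; auto; apply Rinv_0_lt_compat; auto).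
  assert (H1 : 0 < 1 + Xf u v) by lra.
  assert (Hs : 0 < sqrt (1 + Xf u v)) by (apply sqrt_lt_R0; auto).
  unfold Xf in *.
  unfold edg, edk, ecot, eg, ek, el, e1X, eX, eXq; simpl in *.
  repeat split; auto; try lra;
  repeat apply Rmult_integral_contrapositive; repeat split; try lra.
Qed.

Lemma D_eg u v : box u v -> ev (D eg) u v = ev edg u v.
Proof.
  intros [Hu Hv].
  assert (HX : 0 < Xf u v) by (apply X_pos; auto).
  assert (Hq : 0 < sin v * / sin u) by (apply Rmult_lt_0_compat; auto; apply Rinv_0_lt_compat; auto).
  assert (Hs : 0 < sqrt (1 + Xf u v)) by (apply sqrt_lt_R0; lra).
  unfold Xf in *. unfold edg, ecot, eg, ek, e1X, eX, eXq in *; simpl in *.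
  rewrite Rpower_m1 by auto.
  field. repeat split; lra.
Qed.

Lemma D_ek u v : box u v -> ev (D ek) u v = ev edk u v.
Proof.
  intros [Hu Hv].
  assert (HX : 0 < Xf u v) by (apply X_pos; auto).
  assert (Hq : 0 < sin v * / sin u) by (apply Rmult_lt_0_compat; auto; apply Rinv_0_lt_compat; auto).
  assert (Hs : 0 < sqrt (1 + Xf u v)) by (apply sqrt_lt_R0; lra).
  assert (Hss : sqrt (1 + Xf u v) * sqrt (1 + Xf u v) = 1 + Xf u v) by (apply sqrt_sq_eq; lra).
  unfold Xf in *. unfold edk, ecot, el, ek, e1X, eX, eXq in *; simpl in *.
  rewrite Rpower_m1 by auto.
  set (S := sqrt (1 + a * Rpower (sin v * / sin u) p)) in *.
  set (P := Rpower (sin v * / sin u) p) in *.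
  field_simplify_eq. 2:{ repeat split; lra. }
  replace (S ^ 2) with (1 + a * P) by (rewrite <- Hss; ring). ring.
Qed.


Definition Phi x := RInt (ev eg x) x (PI / 2).
Definition J x := RInt (ev ek x) x (PI / 2).
Definition Lint x := RInt (ev el x) x (PI / 2).
Definition cot x := cos x / sin x.

Lemma box_of u v : 0 < u < PI -> 0 < v < PI -> box u v.
Proof. intros; split; apply sin_gt_0; lra. Qed.

Lemma exR_ev e x c d : (forall t, Rmin c d <= t <= Rmax c d -> ok e x t) -> ex_RInt (ev e x) c d.
Proof.
  intros H. apply exR_cont. intros z Hz. apply (cont2d_t (ev e)). apply ev_cont; auto.
Qed.

Lemma ok_int e x : 0 < x < PI / 2 -> (forall u v, box u v -> ok e u v) ->
   ex_RInt (ev e x) x (PI / 2).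
Proof.
  intros Hx H. apply exR_ev. intros t Ht. rewrite Rmin_left, Rmax_right in Ht by lra.
  apply H. apply box_of; lra.
Qed.

Lemma RInt_scal_R (f : R -> R) c d k : ex_RInt f c d ->
  RInt (fun t => k * f t) c d = k * RInt f c d.
Proof. intros H. exact (RInt_scal f c d k H). Qed.

Lemma eg_diag x : 0 < sin x -> ev eg x x = sqrt (1 + a).
Proof.
  intros H. unfold eg, e1X, eX, eXq; simpl. rewrite Rinv_r by lra.
  rewrite Rpower_one, Rmult_1_r. reflexivity.
Qed.

Lemma ek_diag x : 0 < sin x -> ev ek x x = a / sqrt (1 + a).
Proof.
  intros H. unfold ek, e1X, eX, eXq; simpl. rewrite Rinv_r by lra.
  rewrite Rpower_one, Rmult_1_r. reflexivity.
Qed.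

Lemma Phi_der x : 0 < x < PI / 2 ->
  is_derive Phi x (- (p / 2) * cot x * J x - sqrt (1 + a)).
Proof.
  intros Hx. assert (HPI := PI_RGT_0).
  replace (- (p / 2) * cot x * J x - sqrt (1 + a)) with
    (RInt (ev edg x) x (PI / 2) - ev eg x x).
  apply (leib eg edg 0 PI x (PI / 2)); try lra.
  - intros u v Hu Hv. assert (Hb : box u v) by (apply box_of; auto).
    destruct (ok_all u v Hb) as [H1 [H2 [H3 [H4 H5]]]].
    split; [auto | split; [auto | apply D_eg; auto]].
  - rewrite eg_diag by (apply sin_gt_0; lra). f_equal.
    unfold J, cot. rewrite <- RInt_scal_R.
    apply RInt_ext. intros t Ht. unfold edg, ecot; simpl. unfold Rdiv. ring.
    apply ok_int; auto. intros u v Hb. apply ok_all; auto.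
Qed.

Lemma J_der x : 0 < x < PI / 2 ->
  is_derive J x (- p * cot x * Lint x - a / sqrt (1 + a)).
Proof.
  intros Hx. assert (HPI := PI_RGT_0).
  replace (- p * cot x * Lint x - a / sqrt (1 + a)) with
    (RInt (ev edk x) x (PI / 2) - ev ek x x).
  apply (leib ek edk 0 PI x (PI / 2)); try lra.
  - intros u v Hu Hv. assert (Hb : box u v) by (apply box_of; auto).
    destruct (ok_all u v Hb) as [H1 [H2 [H3 [H4 H5]]]].
    split; [auto | split; [auto | apply D_ek; auto]].
  - rewrite ek_diag by (apply sin_gt_0; lra). f_equal.
    unfold Lint, cot. rewrite <- RInt_scal_R.
    apply RInt_ext. intros t Ht. unfold edk, ecot; simpl. unfold Rdiv. ring.
    apply ok_int; auto. intros u v Hb. apply ok_all; auto.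
Qed.


Lemma r0_pos : 0 < r0.
Proof. unfold r0, torr_r. apply Rpower_pos. Qed.

Lemma Derive_torr_r z : 0 < z -> Derive (torr_r beta) z = - beta * Rpower z (- beta - 1).
Proof.
  intros Hz. apply is_derive_unique. unfold torr_r.
  apply is_derive_Reals. apply derivable_pt_lim_power. auto.
Qed.

Lemma Rpower_inv_base y c : 0 < y -> Rpower (/ y) c = Rpower y (- c).
Proof. intros H. unfold Rpower. rewrite ln_Rinv by auto. f_equal. ring. Qed.

Lemma integrand_eq s u : 0 < s -> 0 < u ->
  / Derive (torr_r beta) (torr_zinv beta (r0 * s / u)) ^ 2 = a * Rpower (u * / s) p.
Proof.
  intros Hs Hu. assert (Hr := r0_pos).
  assert (Hrho : 0 < r0 * s / u) by (unfold Rdiv; repeat apply Rmult_lt_0_compat; auto; apply Rinv_0_lt_compat; auto).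
  unfold torr_zinv. rewrite Derive_torr_r by apply Rpower_pos.
  rewrite Rpower_mult.
  set (e := - / beta * (- beta - 1)).
  assert (He : e + e = p) by (unfold e, p; field; lra).
  replace ((- beta * Rpower (r0 * s / u) e) ^ 2) with (beta ^ 2 * Rpower (r0 * s / u) (e + e))
    by (rewrite Rpower_plus; ring).
  rewrite He. rewrite Rinv_mult, <- Rpower_Ropp.
  unfold a. rewrite Rmult_assoc. f_equal.
  replace (u * / s) with (/ (s / u)) by (field; lra).
  rewrite Rpower_inv_base by (unfold Rdiv; apply Rmult_lt_0_compat; auto; apply Rinv_0_lt_compat; auto).
  rewrite Rpower_mult_distr; auto.
  f_equal. unfold Rdiv. ring.
  unfold Rdiv; apply Rmult_lt_0_compat; auto; apply Rinv_0_lt_compat; auto.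
Qed.


Definition eF s := ESqrt (EMul (EAdd (ECst 1) (EMul (ECst a) (EPow (EMul EX (ECst (/ s))) p)))
   (EInv (EAdd (ECst 1) (EMul (ECst (-1)) (EMul EX EX))))).
Definition Fs s u := ev (eF s) u 0.

Lemma Fs_cont s u : 0 < s -> 0 < u < 1 -> continuous (Fs s) u.
Proof.
  intros Hs Hu. apply (cont2d_x (ev (eF s))). apply ev_cont.
  assert (H1 : 0 < u * / s) by (apply Rmult_lt_0_compat; try lra; apply Rinv_0_lt_compat; auto).
  assert (H2 : 0 < 1 + -1 * (u * u)) by nra.
  assert (H3 : 0 < a * Rpower (u * / s) p) by (apply Rmult_lt_0_compat; [apply a_pos|apply Rpower_pos]).
  unfold eF; simpl. repeat split; try lra.
  apply Rmult_lt_0_compat. lra. apply Rinv_0_lt_compat; lra.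
Qed.

Lemma sqrt_div_sq A c : 0 <= A -> 0 < c -> sqrt (A * / (c * c)) = sqrt A / c.
Proof.
  intros HA Hc. rewrite sqrt_mult_alt by auto. rewrite sqrt_inv.
  rewrite sqrt_square by lra. reflexivity.
Qed.

Lemma sin_lt1 y : 0 < y < PI / 2 -> sin y < 1.
Proof.
  intros H. rewrite <- sin_PI2. apply sin_increasing_1; lra.
Qed.

Lemma cov φ0 θ : 0 < φ0 -> φ0 <= θ < PI / 2 ->
  RInt (ev eg φ0) φ0 θ = RInt (Fs (sin φ0)) (sin φ0) (sin θ).
Proof.
  intros H0 Hθ.
  rewrite <- (RInt_comp (V := R_CompleteNormedModule) (Fs (sin φ0)) sin cos).
  - apply RInt_ext. intros y Hy. rewrite Rmin_left, Rmax_right in Hy by lra.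
    assert (Hc : 0 < cos y) by (apply cos_gt_0; lra).
    assert (Hsy : 0 < sin y) by (apply sin_gt_0; lra).
    assert (Hs0 : 0 < sin φ0) by (apply sin_gt_0; lra).
    unfold Fs, eF, eg, e1X, eX, eXq; simpl.
    replace (1 + -1 * (sin y * sin y)) with (cos y * cos y)
      by (generalize (sin2_cos2 y); unfold Rsqr; lra).
    rewrite sqrt_div_sq; auto.
    + change (scal (cos y) (sqrt (1 + a * Rpower (sin y * / sin φ0) p) / cos y)) with
        (cos y * (sqrt (1 + a * Rpower (sin y * / sin φ0) p) / cos y)).
      field. lra.
    + generalize (Rpower_pos (sin y * / sin φ0) p) a_pos. nra.
  - intros x Hx. rewrite Rmin_left, Rmax_right in Hx by lra.
    apply Fs_cont. apply sin_gt_0; lra. split. apply sin_gt_0; lra. apply sin_lt1; lra.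
  - intros x Hx. split. apply is_derive_sin. apply continuous_cos_comp. apply continuous_id.
Qed.


Lemma RInt_bound (f : R -> R) c d m M : c <= d -> ex_RInt f c d ->
  (forall t, c < t < d -> m <= f t <= M) -> (d - c) * m <= RInt f c d <= (d - c) * M.
Proof.
  intros Hcd Hex Hb. split.
  - replace ((d - c) * m) with (RInt (fun _ => m) c d).
    apply RInt_le; auto. apply ex_RInt_const. intros; apply Hb; auto.
    rewrite RInt_const. reflexivity.
  - replace ((d - c) * M) with (RInt (fun _ => M) c d).
    apply RInt_le; auto. apply ex_RInt_const. intros; apply Hb; auto.
    rewrite RInt_const. reflexivity.
Qed.

Lemma eg_bound φ0 t : 0 < φ0 < PI / 2 -> φ0 <= t <= PI / 2 ->
  0 <= ev eg φ0 t <= sqrt (1 + a * Rpower (/ sin φ0) p).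
Proof.
  intros H0 Ht. assert (Hs0 : 0 < sin φ0) by (apply sin_gt_0; lra).
  assert (Hst : 0 < sin t) by (apply sin_gt_0; lra).
  unfold eg, e1X, eX, eXq; simpl. split. apply sqrt_pos.
  apply sqrt_le_1_alt. apply Rplus_le_compat_l. apply Rmult_le_compat_l. left; apply a_pos.
  apply Rle_Rpower_l. generalize p_gt2; lra. split.
  apply Rmult_lt_0_compat; auto; apply Rinv_0_lt_compat; auto.
  rewrite <- (Rmult_1_l (/ sin φ0)) at 2. apply Rmult_le_compat_r.
  left; apply Rinv_0_lt_compat; auto. apply SIN_bound.
Qed.

Lemma rot_int φ0 : 0 < φ0 < PI / 2 ->
  is_RInt_gen (Fs (sin φ0)) (at_point (sin φ0)) (at_left 1) (Phi φ0).
Proof.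
  intros H0. assert (Hs0 : 0 < sin φ0) by (apply sin_gt_0; lra).
  intros P [eps HP]. unfold filtermapi.
  set (Gm := sqrt (1 + a * Rpower (/ sin φ0) p)).
  assert (HGm : 0 <= Gm) by apply sqrt_pos.
  set (eta := eps / (Gm + 1)).
  assert (Heta : 0 < eta) by (unfold eta; apply Rdiv_lt_0_compat; [apply cond_pos | lra]).
  set (θ1 := Rmax φ0 (PI / 2 - eta)).
  assert (Hθ1 : φ0 <= θ1 < PI / 2).
  { unfold θ1. split. apply Rmax_l. apply Rmax_lub_lt; lra. }
  assert (Hsθ1 : sin θ1 < 1) by (apply sin_lt1; lra).
  assert (Hd : 0 < 1 - sin θ1) by lra.
  apply (Filter_prod _ _ _ (fun x => x = sin φ0) (fun b => sin θ1 < b < 1)).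
  - reflexivity.
  - exists (mkposreal _ Hd). intros b Hb Hlt. apply ball_R in Hb. simpl in Hb.
    apply Rabs_def2 in Hb. lra.
  - intros x y Hx Hy. subst x. simpl.
    assert (Hsθ0 : 0 < sin θ1) by (apply sin_gt_0; lra).
    assert (Hasb := asin_bound_lt y ltac:(lra)).
    assert (Has : θ1 < asin y).
    { destruct (Rlt_or_le θ1 (asin y)) as [H|H]; auto.
      exfalso. assert (sin (asin y) <= sin θ1) by (apply sin_incr_1; lra).
      rewrite sin_asin in H1 by lra. lra. }
    exists (RInt (ev eg φ0) φ0 (asin y)). split.
    + assert (sin φ0 <= sin θ1) by (apply sin_incr_1; lra).
      rewrite cov by lra. rewrite sin_asin by lra.
      apply (RInt_correct (V := R_CompleteNormedModule)).
      apply exR_cont. intros z Hz. rewrite Rmin_left, Rmax_right in Hz by lra.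
      apply Fs_cont; auto.
      split. apply Rlt_le_trans with (sin φ0); auto. apply Hz. lra.
    + apply HP. change (Rabs (RInt (ev eg φ0) φ0 (asin y) - Phi φ0) < eps).
      assert (Hex1 : ex_RInt (ev eg φ0) φ0 (asin y)).
      { apply exR_ev. intros t Ht. rewrite Rmin_left, Rmax_right in Ht by lra.
        apply ok_all. apply box_of; lra. }
      assert (Hex2 : ex_RInt (ev eg φ0) (asin y) (PI / 2)).
      { apply exR_ev. intros t Ht. rewrite Rmin_left, Rmax_right in Ht by lra.
        apply ok_all. apply box_of; lra. }
      unfold Phi. rewrite <- (RInt_Chasles (V := R_CompleteNormedModule) _ φ0 (asin y) (PI / 2)) by first [exact Hex1 | exact Hex2].
      change (plus ?u ?v) with (u + v).
      assert (HB := RInt_bound (ev eg φ0) (asin y) (PI / 2) 0 Gm ltac:(lra) Hex2).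
      destruct HB as [HB1 HB2].
      { intros t Ht. apply eg_bound; lra. }
      replace (RInt (ev eg φ0) φ0 (asin y) - (RInt (ev eg φ0) φ0 (asin y) + RInt (ev eg φ0) (asin y) (PI / 2)))
        with (- RInt (ev eg φ0) (asin y) (PI / 2)) by ring.
      rewrite Rabs_Ropp, Rabs_right by lra.
      apply Rle_lt_trans with ((PI / 2 - asin y) * Gm); auto.
      assert (Hθ1' : PI / 2 - eta <= θ1) by apply Rmax_r.
      apply Rle_lt_trans with (eta * Gm). apply Rmult_le_compat_r; lra.
      assert (eta * (Gm + 1) = eps) by (unfold eta; field; lra). lra.
Qed.


Definition dthf := torr_dtheta beta z0.

Lemma dth_pos φ0 : 0 < φ0 < PI / 2 -> dthf φ0 = 2 * Phi φ0.
Proof.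
  intros H0. assert (Hs0 : 0 < sin φ0) by (apply sin_gt_0; lra).
  unfold dthf, torr_dtheta, rotation. rewrite sign_eq_1 by lra.
  rewrite Rabs_right by lra. rewrite Rmult_1_r. f_equal.
  apply (is_RInt_gen_unique (Fa := at_point (sin φ0)) (Fb := at_left 1)).
  apply (is_RInt_gen_ext (Fs (sin φ0))).
  2: apply rot_int; auto.
  apply (Filter_prod _ _ _ (fun x => x = sin φ0) (fun b => 0 < b)).
  - reflexivity.
  - exists (mkposreal 1 Rlt_0_1). intros b Hb _. apply ball_R in Hb. simpl in Hb.
    apply Rabs_def2 in Hb. lra.
  - intros x y Hx Hy z Hz. subst x. simpl in Hz.
    assert (Hzp : 0 < z).
    { destruct Hz as [Hz _]. apply Rle_lt_trans with (Rmin (sin φ0) y); auto.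
      apply Rmin_glb; lra. }
    change (torr_r beta z0) with r0. rewrite integrand_eq by auto.
    unfold Fs, eF; simpl. unfold Rdiv. f_equal. f_equal. f_equal. ring.
Qed.

Lemma dth_odd x : dthf (- x) = - dthf x.
Proof.
  unfold dthf, torr_dtheta, rotation. rewrite sin_neg, Rabs_Ropp, sign_opp. ring.
Qed.


Definition eu := EAdd (ECst (PI / 2)) (EMul (ECst (-1)) EX).
Definition es := EAdd EX (EMul eu ET).
Definition eP := EMul eu (substT eg es).

Lemma ok_eP x t : 0 < x < PI / 2 -> 0 <= t <= 1 -> ok eP x t.
Proof.
  intros Hx Ht. unfold eP. change (ok eu x t /\ ok (substT eg es) x t). split. unfold eu; simpl; tauto.
  apply ok_substT. unfold es, eu; simpl; tauto.
  apply ok_all. apply box_of; try lra. unfold es, eu; simpl. nra.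
Qed.

Lemma Phi_fixed x : 0 < x < PI / 2 -> Phi x = RInt (ev eP x) 0 1.
Proof.
  intros Hx. unfold Phi.
  assert (Hex : ex_RInt (ev eg x) x (PI / 2)) by (apply ok_int; auto; intros; apply ok_all; auto).
  replace (RInt (ev eg x) x (PI / 2)) with
    (RInt (ev eg x) ((PI / 2 - x) * 0 + x) ((PI / 2 - x) * 1 + x)) by (f_equal; ring).
  rewrite <- (RInt_comp_lin (V := R_CompleteNormedModule)).
  - apply RInt_ext. intros t Ht. unfold eP. change (ev (EMul eu (substT eg es)) x t) with (ev eu x t * ev (substT eg es) x t). rewrite ev_substT.
    change (scal (PI / 2 - x) (ev eg x ((PI / 2 - x) * t + x))) with
      ((PI / 2 - x) * ev eg x ((PI / 2 - x) * t + x)).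
    unfold es, eu; simpl. replace (x + (PI / 2 + -1 * x) * t) with ((PI / 2 - x) * t + x) by ring. ring.
  - replace ((PI / 2 - x) * 0 + x) with x by ring.
    replace ((PI / 2 - x) * 1 + x) with (PI / 2) by ring. exact Hex.
Qed.

Definition K1 x := 2 * RInt (ev (D eP) x) 0 1.

Lemma I0_der x : 0 < x < PI / 2 ->
  is_derive (fun z => RInt (ev eP z) 0 1) x (RInt (ev (D eP) x) 0 1).
Proof. intros Hx. apply (RInt_param_der eP 0 (PI / 2)); auto. intros; apply ok_eP; auto. Qed.

Lemma dth_der_pos x : 0 < x < PI / 2 -> is_derive dthf x (K1 x).
Proof.
  intros Hx. apply is_derive_ext_loc with (f := fun z => 2 * RInt (ev eP z) 0 1).
  - generalize (loc_int 0 (PI / 2) x Hx). apply filter_imp. intros y Hy.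
    rewrite dth_pos by auto. rewrite Phi_fixed by auto. reflexivity.
  - unfold K1. apply (is_derive_scal (fun z => RInt (ev eP z) 0 1)). apply I0_der; auto.
Qed.

Lemma dth_der_neg x : 0 < x < PI / 2 -> is_derive dthf (- x) (K1 x).
Proof.
  intros Hx. apply is_derive_ext_loc with (f := fun z => - (2 * RInt (ev eP (- z)) 0 1)).
  - assert (Hx' : - (PI / 2) < - x < 0) by lra.
    generalize (loc_int _ _ (- x) Hx'). apply filter_imp. intros y Hy.
    rewrite <- (Ropp_involutive y) at 2. rewrite dth_odd.
    rewrite dth_pos by lra. rewrite Phi_fixed by lra. reflexivity.
  - replace (K1 x) with (- (2 * (-1 * RInt (ev (D eP) x) 0 1))) by (unfold K1; ring).
    apply (is_derive_opp (fun z => 2 * RInt (ev eP (- z)) 0 1)).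
    apply (is_derive_scal (fun z => RInt (ev eP (- z)) 0 1)).
    apply (idR_comp (fun z => RInt (ev eP z) 0 1) (fun z => - z)).
    rewrite Ropp_involutive. apply I0_der; auto.
    auto_derive; auto.
Qed.

Definition kap := torr_kappa beta z0.

Lemma kappa_pos x : 0 < x < PI / 2 -> kap x = K1 x.
Proof. intros; apply is_derive_unique, dth_der_pos; auto. Qed.
Lemma kappa_neg x : 0 < x < PI / 2 -> kap (- x) = K1 x.
Proof. intros; apply is_derive_unique, dth_der_neg; auto. Qed.

Lemma K1_formula x : 0 < x < PI / 2 -> K1 x = - p * cot x * J x - 2 * sqrt (1 + a).
Proof.
  intros Hx. unfold K1. 
  assert (H1 := I0_der x Hx).
  assert (H2 := Phi_der x Hx).
  assert (H3 : is_derive (fun z => RInt (ev eP z) 0 1) x (- (p / 2) * cot x * J x - sqrt (1 + a))).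
  { apply is_derive_ext_loc with (f := Phi); auto.
    generalize (loc_int 0 (PI / 2) x Hx). apply filter_imp. intros y Hy. apply Phi_fixed; auto. }
  apply is_derive_unique in H1. apply is_derive_unique in H3. rewrite H1 in H3. rewrite H3. field.
Qed.


Definition kp x := p * J x / (sin x) ^ 2 + p * cot x * (p * cot x * Lint x + a / sqrt (1 + a)).

Lemma kform_der x : 0 < x < PI / 2 ->
  is_derive (fun z => - p * cot z * J z - 2 * sqrt (1 + a)) x (kp x).
Proof.
  intros Hx. assert (Hs : 0 < sin x) by (apply sin_gt_0; lra).
  assert (Hc : is_derive cot x (- / (sin x) ^ 2)).
  { unfold cot. auto_derive. lra.
    assert (H2 := sin2_cos2 x). unfold Rsqr in H2. field_simplify_eq. nra. lra. }
  assert (HJ := J_der x Hx).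
  evar (l : R). replace (kp x) with l.
  apply (idR_plus (fun z => - p * cot z * J z) (fun _ => - (2 * sqrt (1 + a)))).
  apply (idR_mult (fun z => - p * cot z) J).
  apply (is_derive_scal cot). exact Hc. exact HJ.
  auto_derive; auto.
  unfold l, kp. unfold Rdiv. ring.
Qed.

Lemma kappa_der_pos x : 0 < x < PI / 2 -> is_derive kap x (kp x).
Proof.
  intros Hx. apply is_derive_ext_loc with (f := fun z => - p * cot z * J z - 2 * sqrt (1 + a)).
  - generalize (loc_int 0 (PI / 2) x Hx). apply filter_imp. intros y Hy.
    rewrite kappa_pos, K1_formula by auto. reflexivity.
  - apply kform_der; auto.
Qed.

Lemma kappa_der_neg x : 0 < x < PI / 2 -> is_derive kap (- x) (- kp x).
Proof.
  intros Hx. apply is_derive_ext_loc with (f := fun z => kap (- z)).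
  - assert (Hx' : - (PI / 2) < - x < 0) by lra.
    generalize (loc_int _ _ (- x) Hx'). apply filter_imp. intros y Hy.
    rewrite <- (Ropp_involutive y) at 2. rewrite (kappa_neg (- y)) by lra.
    rewrite kappa_pos by lra. reflexivity.
  - replace (- kp x) with (-1 * kp x) by ring.
    apply (idR_comp kap (fun z => - z)). rewrite Ropp_involutive. apply kappa_der_pos; auto.
    auto_derive; auto.
Qed.


Definition Q x := Rpower (/ sin x) p.
Definition d := Rpower (/ 2) p.

Lemma d_pos : 0 < d.
Proof. apply Rpower_pos. Qed.

Lemma Q_ge x : 0 < sin x -> 1 <= Q x /\ / sin x <= Q x.
Proof.
  intros Hs. assert (H1 : 1 <= / sin x).
  { rewrite <- Rinv_1. apply Rinv_le_contravar; auto. apply SIN_bound. }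
  assert (Hp := p_gt2). unfold Q. split.
  - rewrite <- (Rpower_O (/ sin x)) at 1 by lra. apply Rle_Rpower; lra.
  - rewrite <- (Rpower_1 (/ sin x)) at 1 by lra. apply Rle_Rpower; lra.
Qed.

Lemma sq_le_sqrt k A : 0 <= k -> k * k <= A -> k <= sqrt A.
Proof.
  intros Hk H. rewrite <- (sqrt_square k) by auto. apply sqrt_le_1_alt. auto.
Qed.

Lemma sqrt_le_sq k A : 0 <= k -> 0 <= A -> A <= k * k -> sqrt A <= k.
Proof.
  intros Hk HA H. rewrite <- (sqrt_square k) by auto. apply sqrt_le_1_alt. auto.
Qed.

Lemma ek_expr x t : ev ek x t = Xf x t / sqrt (1 + Xf x t).
Proof. reflexivity. Qed.
Lemma el_expr x t : ev el x t = Xf x t * (2 + Xf x t) / (2 * (1 + Xf x t) * sqrt (1 + Xf x t)).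
Proof. reflexivity. Qed.

Lemma ek_ub x t : 0 < sin x -> 0 < sin t ->
  0 <= ev el x t <= ev ek x t /\ 0 <= ev ek x t <= sqrt (a * Q x).
Proof.
  intros Hx Ht. rewrite ek_expr, el_expr.
  assert (HX := X_pos x t Hx Ht).
  assert (Hs : 0 < sqrt (1 + Xf x t)) by (apply sqrt_lt_R0; lra).
  assert (Hss : sqrt (1 + Xf x t) * sqrt (1 + Xf x t) = 1 + Xf x t) by (apply sqrt_sq_eq; lra).
  assert (HXQ : Xf x t <= a * Q x).
  { rewrite Xf_eq. unfold Q. apply Rmult_le_compat_l. left; apply a_pos.
    apply Rle_Rpower_l. generalize p_gt2; lra. split.
    apply Rmult_lt_0_compat; auto; apply Rinv_0_lt_compat; auto.
    unfold Rdiv. rewrite <- (Rmult_1_l (/ sin x)) at 2. apply Rmult_le_compat_r.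
    left; apply Rinv_0_lt_compat; auto. apply SIN_bound. }
  set (X := Xf x t) in *. set (S := sqrt (1 + X)) in *.
  assert (Hk : 0 <= X / S) by (unfold Rdiv; apply Rmult_le_pos; [lra | left; apply Rinv_0_lt_compat; lra]).
  split; [split|split]; auto.
  - unfold Rdiv. apply Rmult_le_pos. nra. left. apply Rinv_0_lt_compat. nra.
  - unfold Rdiv. rewrite Rinv_mult, Rinv_mult.
    replace (X * (2 + X) * (/ 2 * / (1 + X) * / S)) with ((X * / S) * ((2 + X) * / (2 * (1 + X)))).
    2:{ field. split; lra. }
    rewrite <- (Rmult_1_r (X * / S)) at 2. apply Rmult_le_compat_l. exact Hk.
    apply Rmult_le_reg_r with (2 * (1 + X)). lra. rewrite Rmult_assoc, Rinv_l by lra. lra.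
  - apply sq_le_sqrt; auto.
    replace (X / S * (X / S)) with (X * X / (1 + X)) by (unfold Rdiv; rewrite <- Hss; field; lra).
    apply Rle_trans with X; auto.
    apply Rmult_le_reg_r with (1 + X). lra. unfold Rdiv. rewrite Rmult_assoc, Rinv_l by lra. nra.
Qed.

Lemma ek_lb x t : 0 < sin x -> / 2 <= sin t -> 1 <= a * d * Q x ->
  sqrt (a * d * Q x / 2) <= ev ek x t.
Proof.
  intros Hx Ht HQ. rewrite ek_expr.
  assert (Hst : 0 < sin t) by lra.
  assert (HX := X_pos x t Hx Hst).
  assert (Hs : 0 < sqrt (1 + Xf x t)) by (apply sqrt_lt_R0; lra).
  assert (Hss : sqrt (1 + Xf x t) * sqrt (1 + Xf x t) = 1 + Xf x t) by (apply sqrt_sq_eq; lra).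
  assert (HXQ : a * d * Q x <= Xf x t).
  { rewrite Xf_eq. unfold Q, d. rewrite Rmult_assoc. apply Rmult_le_compat_l. left; apply a_pos.
    rewrite Rpower_mult_distr. 2: lra. 2: apply Rinv_0_lt_compat; auto.
    apply Rle_Rpower_l. generalize p_gt2; lra. split.
    apply Rmult_lt_0_compat; try lra; apply Rinv_0_lt_compat; auto.
    apply Rmult_le_compat_r; auto. left; apply Rinv_0_lt_compat; auto. }
  set (X := Xf x t) in *. set (S := sqrt (1 + X)) in *.
  assert (Hk : 0 <= X / S) by (unfold Rdiv; apply Rmult_le_pos; [lra | left; apply Rinv_0_lt_compat; lra]).
  apply sqrt_le_sq; auto. generalize d_pos a_pos (Q_ge x Hx). intros. 
  apply Rmult_le_pos. apply Rmult_le_pos. nra. lra. lra.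
  replace (X / S * (X / S)) with (X * X / (1 + X)) by (unfold Rdiv; rewrite <- Hss; field; lra).
  apply Rle_trans with (X / 2). lra.
  apply Rmult_le_reg_r with (1 + X). lra. replace (X * X / (1 + X) * (1 + X)) with (X * X) by (field; lra). nra.
Qed.


Lemma exR_sub e x c d' : 0 < x < PI / 2 -> x <= c -> c <= d' -> d' <= PI / 2 ->
  (forall u v, box u v -> ok e u v) -> ex_RInt (ev e x) c d'.
Proof.
  intros Hx Hc Hcd Hd H. apply exR_ev. intros t Ht.
  rewrite Rmin_left, Rmax_right in Ht by lra. apply H. apply box_of; lra.
Qed.

Lemma okk u v : box u v -> ok ek u v. Proof. intros; apply ok_all; auto. Qed.
Lemma okl u v : box u v -> ok el u v. Proof. intros; apply ok_all; auto. Qed.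

Lemma JL_ub x : 0 < x < PI / 2 ->
  0 <= Lint x <= PI / 2 * sqrt (a * Q x) /\ 0 <= J x <= PI / 2 * sqrt (a * Q x).
Proof.
  intros Hx. assert (Hsx : 0 < sin x) by (apply sin_gt_0; lra).
  assert (Hq : 0 <= sqrt (a * Q x)) by apply sqrt_pos.
  assert (HB : forall t, x < t < PI / 2 -> 0 <= ev el x t <= sqrt (a * Q x) /\ 0 <= ev ek x t <= sqrt (a * Q x)).
  { intros t Ht. assert (0 < sin t) by (apply sin_gt_0; lra).
    destruct (ek_ub x t) as [[H1 H2] [H3 H4]]; auto. split; split; lra. }
  destruct (RInt_bound (ev el x) x (PI / 2) 0 (sqrt (a * Q x))) as [L1 L2]; try lra.
  apply exR_sub; auto; try lra. apply okl. intros; apply HB; auto.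
  destruct (RInt_bound (ev ek x) x (PI / 2) 0 (sqrt (a * Q x))) as [K1' K2]; try lra.
  apply exR_sub; auto; try lra. apply okk. intros; apply HB; auto.
  unfold Lint, J. split; split; try nra.
Qed.

Lemma J_lb x : 0 < x <= PI / 6 -> 1 <= a * d * Q x ->
  PI / 3 * sqrt (a * d * Q x / 2) <= J x.
Proof.
  intros Hx HQ. assert (HPI := PI_RGT_0).
  assert (Hsx : 0 < sin x) by (apply sin_gt_0; lra).
  unfold J. rewrite <- (RInt_Chasles (V := R_CompleteNormedModule) _ x (PI / 6) (PI / 2)).
  2, 3: apply exR_sub; try lra; apply okk.
  change (plus ?u ?v) with (u + v).
  destruct (RInt_bound (ev ek x) x (PI / 6) 0 (sqrt (a * Q x))) as [L1 L2]; try lra.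
  apply exR_sub; try lra; apply okk.
  { intros t Ht. assert (0 < sin t) by (apply sin_gt_0; lra).
    destruct (ek_ub x t) as [_ [H3 H4]]; auto. }
  destruct (RInt_bound (ev ek x) (PI / 6) (PI / 2) (sqrt (a * d * Q x / 2)) (sqrt (a * Q x))) as [K1' K2]; try lra.
  apply exR_sub; try lra; apply okk.
  { intros t Ht. assert (0 < sin t) by (apply sin_gt_0; lra).
    assert (/ 2 <= sin t).
    { replace (/ 2) with (sin (PI / 6)) by (rewrite sin_PI6; field). apply sin_incr_1; lra. }
    split. apply ek_lb; auto. destruct (ek_ub x t) as [_ [H3 H4]]; auto. }
Qed.


Definition cc := 2 * sqrt (1 + a).
Definition dS := Rmin (PI / 6) (a * d).
Definition J0 := PI / 3 * sqrt (/ 2).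

Lemma cc_gt2 : 2 < cc.
Proof.
  unfold cc. assert (1 < sqrt (1 + a)).
  { assert (sqrt 1 < sqrt (1 + a)) by (apply sqrt_lt_1_alt; generalize a_pos; lra). rewrite sqrt_1 in H; lra. } lra.
Qed.

Lemma dS_pos : 0 < dS.
Proof. unfold dS. apply Rmin_pos. generalize PI_RGT_0; lra. apply Rmult_lt_0_compat. apply a_pos. apply d_pos. Qed.

Lemma d_le1 : d <= 1.
Proof. unfold d. rewrite <- (Rpower_one p). apply Rle_Rpower_l. generalize p_gt2; lra. lra. Qed.

Lemma small_facts x : 0 < x <= dS ->
  1 <= a * d * Q x /\ 1 <= cot x /\ / 2 <= cos x /\ 0 < sin x <= x /\ x <= PI / 6.
Proof.
  intros Hx. assert (HPI := PI_4). assert (HPI0 := PI_RGT_0).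
  assert (Hx1 : x <= PI / 6) by (generalize (Rmin_l (PI / 6) (a * d)); unfold dS in Hx; lra).
  assert (Hx2 : x <= a * d) by (generalize (Rmin_r (PI / 6) (a * d)); unfold dS in Hx; lra).
  assert (Hs : 0 < sin x) by (apply sin_gt_0; lra).
  assert (Hsx : sin x < x) by (apply sin_lt_x; lra).
  assert (Hc : 0 < cos x) by (apply cos_gt_0; lra).
  assert (H2 := sin2_cos2 x). unfold Rsqr in H2.
  assert (Had := Rmult_lt_0_compat _ _ a_pos d_pos).
  split; [|split; [|split]]; try (split; lra).
  - destruct (Q_ge x Hs) as [_ HQ].
    apply Rle_trans with (a * d * / sin x).
    + apply Rmult_le_reg_r with (sin x); auto. rewrite Rmult_assoc, Rinv_l by lra. nra.
    + apply Rmult_le_compat_l; lra.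
  - unfold cot. apply Rmult_le_reg_r with (sin x); auto. unfold Rdiv.
    rewrite Rmult_assoc, Rinv_l by lra. assert (sin x * sin x <= 4 / 9) by nra. nra.
  - assert (sin x * sin x <= 4 / 9) by nra. nra.
Qed.

Lemma kappa_form x : 0 < x < PI / 2 -> kap x = - p * cot x * J x - cc.
Proof. intros Hx. rewrite kappa_pos, K1_formula by auto. reflexivity. Qed.

Lemma cot_pos x : 0 < x < PI / 2 -> 0 < cot x.
Proof.
  intros Hx. unfold cot. apply Rdiv_lt_0_compat. apply cos_gt_0; lra. apply sin_gt_0; generalize PI_RGT_0; lra.
Qed.

Lemma kappa_le x : 0 < x < PI / 2 -> kap x <= - cc.
Proof.
  intros Hx. rewrite kappa_form by auto. destruct (JL_ub x Hx) as [_ [HJ _]].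
  assert (H := cot_pos x Hx). generalize p_gt2. intros. 
  assert (0 <= p * cot x * J x) by (apply Rmult_le_pos; nra). lra.
Qed.

Lemma J_ge_J0 x : 0 < x <= dS -> J0 <= J x.
Proof.
  intros Hx. destruct (small_facts x Hx) as [H1 [H2 [H3 [H4 H5]]]].
  apply Rle_trans with (PI / 3 * sqrt (a * d * Q x / 2)).
  - unfold J0. apply Rmult_le_compat_l. generalize PI_RGT_0; lra.
    apply sqrt_le_1_alt. lra.
  - apply J_lb; auto. lra.
Qed.

Lemma J0_pos : 0 < J0.
Proof. unfold J0. apply Rmult_lt_0_compat. generalize PI_RGT_0; lra. apply sqrt_lt_R0; lra. Qed.

Lemma kappa_small x : 0 < x <= dS -> kap x <= - (p * J0 / 2) / x.
Proof.
  intros Hx. destruct (small_facts x Hx) as [H1 [H2 [H3 [H4 H5]]]].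
  assert (HPI := PI_RGT_0).
  rewrite kappa_form by lra. assert (HJ := J_ge_J0 x Hx). assert (HJ0 := J0_pos).
  assert (Hp := p_gt2). assert (Hcc := cc_gt2).
  assert (Hcot : / 2 / x <= cot x).
  { unfold cot. unfold Rdiv. apply Rmult_le_compat; try lra. left; apply Rinv_0_lt_compat; lra.
    apply Rinv_le_contravar; lra. }
  assert (p * J0 * (/ 2 / x) <= p * cot x * J x).
  { assert (0 <= / 2 / x) by (left; apply Rdiv_lt_0_compat; lra).
    assert (J0 * (/ 2 / x) <= J x * cot x) by (apply Rmult_le_compat; lra).
    replace (p * cot x * J x) with (p * (J x * cot x)) by ring.
    rewrite Rmult_assoc. apply Rmult_le_compat_l; lra. }
  replace (- (p * J0 / 2) / x) with (- (p * J0 * (/ 2 / x))) by (field; lra). lra.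
Qed.


Definition C0 := p * PI + p ^ 2 * PI / 2 + p * a.
Definition K0 := p * J0.
Definition Kk := p * (PI / 3) * sqrt (d / 2).
Definition C3 := C0 / (K0 ^ 2 * Kk).

Lemma inv_sin2 x : 0 < sin x -> / (sin x) ^ 2 = 1 + cot x ^ 2.
Proof.
  intros Hs. unfold cot. assert (H := sin2_cos2 x). unfold Rsqr in H.
  field_simplify_eq; [|lra]. nra.
Qed.

Lemma kp_nonneg x : 0 < x < PI / 2 -> p * J x / (sin x) ^ 2 <= kp x.
Proof.
  intros Hx. unfold kp. destruct (JL_ub x Hx) as [[HL _] _].
  assert (HT := cot_pos x Hx). assert (Hp := p_gt2).
  assert (0 <= a / sqrt (1 + a)).
  { unfold Rdiv. apply Rmult_le_pos. left; apply a_pos. left; apply Rinv_0_lt_compat.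
    apply sqrt_lt_R0. generalize a_pos; lra. }
  assert (0 <= p * cot x * (p * cot x * Lint x + a / sqrt (1 + a))).
  { apply Rmult_le_pos. nra. apply Rplus_le_le_0_compat; auto.
    apply Rmult_le_pos; nra. }
  lra.
Qed.

Lemma item3_bound x : 0 < x <= dS -> 0 <= kp x <= C3 * Rabs (2 + kap x) ^ 3.
Proof.
  intros Hx. destruct (small_facts x Hx) as [H1 [H2 [H3 [H4 H5]]]].
  assert (HPI := PI_RGT_0). assert (Hx' : 0 < x < PI / 2) by lra.
  assert (Hp := p_gt2). assert (Ha := a_pos). assert (Hd := d_pos). assert (Hd1 := d_le1).
  assert (Hs : 0 < sin x) by lra.
  destruct (JL_ub x Hx') as [[HL1 HL2] [HJ1 HJ2]].
  destruct (Q_ge x Hs) as [HQ1 HQ2].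
  set (T := cot x) in *. set (m := sqrt (a * Q x)) in *.
  assert (Hm : 1 <= m).
  { unfold m. rewrite <- sqrt_1. apply sqrt_le_1_alt.
    apply Rle_trans with (a * d * Q x); auto. rewrite Rmult_assoc, (Rmult_comm d), <- Rmult_assoc.
    rewrite <- (Rmult_1_r (a * Q x)) at 2. apply Rmult_le_compat_l; try lra.
    apply Rmult_le_pos; lra. }
  assert (HJl : PI / 3 * sqrt (d / 2) * m <= J x).
  { apply Rle_trans with (PI / 3 * sqrt (a * d * Q x / 2)).
    - unfold m. rewrite Rmult_assoc, <- sqrt_mult_alt by lra. right. f_equal. f_equal. field.
    - apply J_lb; auto. lra. }
  assert (Hsq : 0 < sqrt (d / 2)) by (apply sqrt_lt_R0; lra).
  assert (HJ0 := J0_pos). assert (HJJ0 := J_ge_J0 x Hx).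
  assert (Hsa : a / sqrt (1 + a) <= a).
  { assert (Hs1 : sqrt 1 <= sqrt (1 + a)) by (apply sqrt_le_1_alt; lra). rewrite sqrt_1 in Hs1.
    assert (Hi : / sqrt (1 + a) <= / 1) by (apply Rinv_le_contravar; lra). rewrite Rinv_1 in Hi.
    unfold Rdiv. apply Rle_trans with (a * 1); [apply Rmult_le_compat_l; lra | lra]. }
  assert (Hsa0 : 0 <= a / sqrt (1 + a)).
  { unfold Rdiv. apply Rmult_le_pos. lra. left; apply Rinv_0_lt_compat.
    apply sqrt_lt_R0. lra. }
  assert (Hkp0 : 0 <= kp x).
  { apply Rle_trans with (p * J x / (sin x) ^ 2). unfold Rdiv. apply Rmult_le_pos. nra.
    left; apply Rinv_0_lt_compat; nra. apply kp_nonneg; auto. }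
  split; auto.
  assert (Hkp : kp x <= C0 * (T ^ 2 * m)).
  { unfold kp. unfold Rdiv at 1. rewrite Rmult_assoc, inv_sin2 by auto. fold T.
    unfold C0.
    assert (p * (J x * (1 + T ^ 2)) <= p * PI * (T ^ 2 * m)).
    { assert (J x * (1 + T ^ 2) <= PI / 2 * m * (2 * T ^ 2)) by (apply Rmult_le_compat; nra). nra. }
    assert (p * T * (p * T * Lint x) <= p ^ 2 * PI / 2 * (T ^ 2 * m)).
    { assert (Lint x <= PI / 2 * m) by lra.
      assert (0 <= p ^ 2 * T ^ 2) by nra.
      replace (p * T * (p * T * Lint x)) with (p ^ 2 * T ^ 2 * Lint x) by ring.
      replace (p ^ 2 * PI / 2 * (T ^ 2 * m)) with (p ^ 2 * T ^ 2 * (PI / 2 * m)) by field.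
      apply Rmult_le_compat_l; auto. }
    assert (p * T * (a / sqrt (1 + a)) <= p * a * (T ^ 2 * m)).
    { assert (T <= T ^ 2 * m) by nra.
      assert (a / sqrt (1 + a) * T <= a * (T ^ 2 * m)) by (apply Rmult_le_compat; nra).
      nra. }
    nra. }
  assert (HA : p * T * J x <= Rabs (2 + kap x)).
  { rewrite kappa_form by auto. fold T. assert (Hcc := cc_gt2).
    rewrite Rabs_left. lra. assert (0 <= p * T * J x) by (apply Rmult_le_pos; nra). lra. }
  assert (HTJ : 0 <= p * T * J x) by (apply Rmult_le_pos; nra).
  assert (HA3 : (p * T * J x) ^ 3 <= Rabs (2 + kap x) ^ 3) by (apply pow_incr; lra).
  assert (HK : K0 ^ 2 * Kk * (T ^ 2 * m) <= (p * T * J x) ^ 3).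
  { unfold K0, Kk.
    assert (HpT : 0 <= p * T) by nra.
    assert (p * J0 * T <= p * T * J x).
    { replace (p * J0 * T) with (p * T * J0) by ring. apply Rmult_le_compat_l; lra. }
    assert (p * (PI / 3) * sqrt (d / 2) * m * T <= p * T * J x).
    { replace (p * (PI / 3) * sqrt (d / 2) * m * T) with (p * T * (PI / 3 * sqrt (d / 2) * m)) by ring.
      apply Rmult_le_compat_l; lra. }
    assert (0 <= p * J0 * T) by (apply Rmult_le_pos; [apply Rmult_le_pos|]; lra).
    assert (0 <= p * (PI / 3) * sqrt (d / 2) * m * T).
    { apply Rmult_le_pos; [|lra]. apply Rmult_le_pos; [|lra]. apply Rmult_le_pos; [|lra]. apply Rmult_le_pos; lra. }
    assert ((p * J0 * T) ^ 2 * (p * (PI / 3) * sqrt (d / 2) * m * T) <= (p * T * J x) ^ 3).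
    { replace ((p * T * J x) ^ 3) with ((p * T * J x) ^ 2 * (p * T * J x)) by ring.
      apply Rmult_le_compat; try nra; try (apply pow_le; lra); try (apply pow_incr; lra). }
    assert (T ^ 2 * m <= T ^ 3 * m).
    { assert (0 <= T ^ 2 * m * (T - 1)) by (apply Rmult_le_pos; [apply Rmult_le_pos; [apply pow_le|]|]; lra).
      replace (T ^ 3 * m) with (T ^ 2 * m + T ^ 2 * m * (T - 1)) by ring. lra. }
    assert (0 <= (p * J0) ^ 2 * (p * (PI / 3) * sqrt (d / 2))).
    { apply Rmult_le_pos. apply pow_le; apply Rmult_le_pos; lra. apply Rmult_le_pos; [apply Rmult_le_pos|]; lra. }
    apply Rle_trans with ((p * J0) ^ 2 * (p * (PI / 3) * sqrt (d / 2)) * (T ^ 3 * m)).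
    apply Rmult_le_compat_l; auto.
    apply Rle_trans with ((p * J0 * T) ^ 2 * (p * (PI / 3) * sqrt (d / 2) * m * T)); auto.
    right; ring. }
  assert (HK0 : 0 < K0 ^ 2 * Kk).
  { unfold K0, Kk. apply Rmult_lt_0_compat. apply pow_lt. apply Rmult_lt_0_compat; lra.
    apply Rmult_lt_0_compat; [apply Rmult_lt_0_compat|]; lra. }
  unfold C3. set (KK := K0 ^ 2 * Kk) in *. apply Rle_trans with (C0 * (T ^ 2 * m)); auto.
  replace (C0 * (T ^ 2 * m)) with (C0 / KK * (KK * (T ^ 2 * m))) by (field; lra).
  apply Rmult_le_compat_l. unfold C0. apply Rdiv_le_0_compat; try lra.
  assert (0 <= p * a) by (apply Rmult_le_pos; lra). assert (0 <= p ^ 2 * PI / 2) by (unfold Rdiv; apply Rmult_le_pos; [apply Rmult_le_pos; [apply pow_le|]|]; lra).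
  assert (0 <= p * PI) by (apply Rmult_le_pos; lra). lra. lra.
Qed.


Definition omg := torr_omega beta z0.
Definition eps4 := Rmin dS (p * J0 / (16 * (cc - 2))).
Definition dom x := (kp x * cos x - (2 + kap x) * (- sin x)) / cos x ^ 2.

Lemma eps4_pos : 0 < eps4.
Proof.
  unfold eps4. apply Rmin_pos. apply dS_pos. apply Rdiv_lt_0_compat.
  apply Rmult_lt_0_compat. generalize p_gt2; lra. apply J0_pos. generalize cc_gt2; lra.
Qed.

Lemma omega_der x : 0 < x < PI / 2 -> is_derive omg x (dom x).
Proof.
  intros Hx. unfold omg, torr_omega, dom.
  apply (is_derive_div (fun y => 2 + torr_kappa beta z0 y) cos).
  - evar (l : R). replace (kp x) with l. apply (idR_plus (fun _ => 2) (torr_kappa beta z0)).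
    auto_derive; auto. apply kappa_der_pos; auto. unfold l; ring.
  - apply is_derive_cos.
  - apply Rgt_not_eq. apply cos_gt_0; lra.
Qed.

Lemma dom_pos x : 0 < x <= eps4 -> 0 < dom x.
Proof.
  intros Hx. assert (HxdS : 0 < x <= dS) by (generalize (Rmin_l dS (p * J0 / (16 * (cc - 2)))); unfold eps4 in Hx; lra).
  assert (Hxe : x <= p * J0 / (16 * (cc - 2))) by (generalize (Rmin_r dS (p * J0 / (16 * (cc - 2)))); unfold eps4 in Hx; lra).
  destruct (small_facts x HxdS) as [H1 [H2 [H3 [H4 H5]]]].
  assert (HPI := PI_RGT_0). assert (Hx' : 0 < x < PI / 2) by lra.
  assert (Hc : 0 < cos x) by lra. assert (Hs : 0 < sin x) by lra.
  assert (Hp := p_gt2). assert (Hcc := cc_gt2). assert (HJ0 := J0_pos).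
  assert (HJ := J_ge_J0 x HxdS).
  unfold dom. apply Rdiv_lt_0_compat; [|apply pow_lt; lra].
  assert (Hkp := kp_nonneg x Hx').
  rewrite kappa_form by auto.
  assert (HT : cot x * sin x = cos x) by (unfold cot; field; lra).
  assert (Hs2 : / sin x ^ 2 = 1 + cot x ^ 2) by (apply inv_sin2; auto).
  assert (A1 : p * J x * cos x * (1 + cot x ^ 2) <= kp x * cos x).
  { rewrite <- Hs2. replace (p * J x * cos x * / sin x ^ 2) with (p * J x / sin x ^ 2 * cos x) by (unfold Rdiv; ring).
    apply Rmult_le_compat_r; lra. }
  assert (A2 : p * J0 * (/ 2) <= p * J x * cos x * cot x ^ 2).
  { assert (1 <= cot x ^ 2) by nra.
    assert (J0 * / 2 <= J x * cos x) by (apply Rmult_le_compat; lra).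
    assert (0 <= J x * cos x) by nra.
    assert (J0 * / 2 <= J x * cos x * cot x ^ 2) by nra. nra. }
  assert (A3 : (cc - 2) * sin x <= p * J0 / 16).
  { apply Rle_trans with ((cc - 2) * x). apply Rmult_le_compat_l; lra.
    apply Rle_trans with ((cc - 2) * (p * J0 / (16 * (cc - 2)))). apply Rmult_le_compat_l; lra.
    right; field; lra. }
  replace ((2 + (- p * cot x * J x - cc)) * - sin x) with (p * J x * (cot x * sin x) + (cc - 2) * sin x) by ring.
  rewrite HT.
  assert (A1' : p * J x * cos x + p * J x * cos x * cot x ^ 2 <= kp x * cos x).
  { replace (p * J x * cos x + p * J x * cos x * cot x ^ 2) with (p * J x * cos x * (1 + cot x ^ 2)) by ring. exact A1. }
  assert (0 < p * J0) by nra. lra.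
Qed.

Lemma omega_incr x y : 0 < x -> x <= y -> y <= eps4 -> omg x <= omg y.
Proof.
  intros Hx Hxy Hy. destruct Hxy as [Hxy|Hxy]; [|subst; lra].
  left. assert (Hd := Rmin_l dS (p * J0 / (16 * (cc - 2)))).
  assert (HdS := Rmin_l (PI / 6) (a * d)). fold dS in HdS. fold eps4 in Hd.
  assert (HPI := PI_RGT_0).
  apply (incr_function_le omg x eps4 dom); simpl; try lra.
  - intros t Ht1 Ht2. apply omega_der. lra.
  - intros t Ht1 Ht2. apply dom_pos. lra.
Qed.

Definition Bn := p * 2 * (PI / 2) * sqrt (a * Rpower 2 p).

Lemma kappa_near x : PI / 6 <= x < PI / 2 -> Rabs (kap x + cc) <= Bn * (PI / 2 - x).
Proof.
  intros Hx. assert (HPI := PI_RGT_0). assert (Hx' : 0 < x < PI / 2) by lra.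
  rewrite kappa_form by auto.
  assert (Hs2 : / 2 <= sin x).
  { replace (/ 2) with (sin (PI / 6)) by (rewrite sin_PI6; field). apply sin_incr_1; lra. }
  assert (Hc : 0 < cos x) by (apply cos_gt_0; lra).
  assert (Hcx : cos x <= PI / 2 - x).
  { rewrite <- sin_shift. destruct (Rlt_or_le 0 (PI / 2 - x)). left; apply sin_lt_x; auto. lra. }
  destruct (JL_ub x Hx') as [_ [HJ1 HJ2]].
  assert (HQ : sqrt (a * Q x) <= sqrt (a * Rpower 2 p)).
  { apply sqrt_le_1_alt. apply Rmult_le_compat_l. left; apply a_pos. unfold Q.
    apply Rle_Rpower_l. generalize p_gt2; lra. split. apply Rinv_0_lt_compat; lra.
    replace 2 with (/ / 2) by field. apply Rinv_le_contravar; lra. }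
  assert (Hcot : 0 <= cot x <= 2 * (PI / 2 - x)).
  { unfold cot. split. left; apply Rdiv_lt_0_compat; lra.
    apply Rmult_le_reg_r with (sin x). lra. unfold Rdiv. rewrite Rmult_assoc, Rinv_l by lra. nra. }
  replace (- p * cot x * J x - cc + cc) with (- (p * cot x * J x)) by ring.
  rewrite Rabs_Ropp. assert (Hp := p_gt2).
  rewrite Rabs_right by (apply Rle_ge; apply Rmult_le_pos; [apply Rmult_le_pos|]; lra).
  unfold Bn. 
  assert (cot x * J x <= 2 * (PI / 2 - x) * (PI / 2 * sqrt (a * Rpower 2 p))).
  { assert (J x <= PI / 2 * sqrt (a * Rpower 2 p)) by
      (apply Rle_trans with (PI / 2 * sqrt (a * Q x)); [lra | apply Rmult_le_compat_l; lra]).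
    apply Rmult_le_compat; try lra. }
  replace (p * 2 * (PI / 2) * sqrt (a * Rpower 2 p) * (PI / 2 - x)) with (p * (2 * (PI / 2 - x) * (PI / 2 * sqrt (a * Rpower 2 p)))) by ring.
  rewrite Rmult_assoc. apply Rmult_le_compat_l; lra.
Qed.


Lemma kappa_even x : 0 < x < PI / 2 -> kap (- x) = kap x.
Proof. intros Hx. rewrite kappa_neg, kappa_pos by auto. reflexivity. Qed.

Lemma omega_even x : 0 < x < PI / 2 -> omg (- x) = omg x.
Proof.
  intros Hx. unfold omg, torr_omega. fold kap. rewrite kappa_even, cos_neg by auto. reflexivity.
Qed.

Lemma K1_smooth n x : 0 < x < PI / 2 -> ex_derive_n K1 n x.
Proof.
  intros Hx. unfold K1. apply ex_derive_n_scal_l.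
  apply (exDn_int (D eP) 0 (PI / 2)); auto.
  intros; apply ok_D; apply ok_eP; auto.
Qed.

Lemma kappa_smooth_pos n x : 0 < x < PI / 2 -> ex_derive_n kap n x.
Proof.
  intros Hx. apply ex_derive_n_ext_loc with (f := K1).
  - generalize (loc_int 0 (PI / 2) x Hx). apply filter_imp. intros y Hy.
    symmetry; apply kappa_pos; auto.
  - apply K1_smooth; auto.
Qed.

Lemma kappa_smooth_neg n x : 0 < x < PI / 2 -> ex_derive_n kap n (- x).
Proof.
  intros Hx. apply ex_derive_n_ext_loc with (f := fun y => K1 (- y)).
  - assert (Hx' : - (PI / 2) < - x < 0) by lra.
    generalize (loc_int _ _ (- x) Hx'). apply filter_imp. intros y Hy.
    symmetry. rewrite <- (Ropp_involutive y) at 1. apply kappa_neg; lra.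
  - apply ex_derive_n_comp_opp. rewrite Ropp_involutive.
    generalize (loc_int 0 (PI / 2) x Hx). apply filter_imp. intros y Hy k Hk.
    apply K1_smooth; auto.
Qed.

Lemma kappa_near_abs x : PI / 6 <= Rabs x < PI / 2 -> Rabs (kap x + cc) <= Bn * (PI / 2 - Rabs x).
Proof.
  intros Hx. assert (HPI := PI_RGT_0). destruct (Rle_or_lt 0 x) as [H|H].
  - rewrite (Rabs_right x) in Hx |- * by lra. apply kappa_near; auto.
  - rewrite (Rabs_left x) in Hx |- * by lra. rewrite <- (Ropp_involutive x) at 1. rewrite kappa_even by lra.
    apply kappa_near; lra.
Qed.

Lemma kappa_small_abs x : 0 < Rabs x <= dS -> kap x <= - (p * J0 / 2) / Rabs x.
Proof.
  intros Hx. assert (HPI := PI_RGT_0). assert (HdS := Rmin_l (PI / 6) (a * d)). fold dS in HdS.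
  destruct (Rle_or_lt 0 x) as [H|H].
  - rewrite (Rabs_right x) in Hx |- * by lra. apply kappa_small; auto.
  - rewrite (Rabs_left x) in Hx |- * by lra. rewrite <- (Ropp_involutive x) at 1. rewrite kappa_even by lra.
    apply kappa_small; lra.
Qed.

End Torr.


Theorem mainTheorem9 (beta z0 : R) (hbeta : 0 < beta) (hz0 : 0 < z0) :
  let r0 := torr_r beta z0 in
  let dth := torr_dtheta beta z0 in
  let kappa := torr_kappa beta z0 in
  let omega := torr_omega beta z0 in
  let c := 2 * sqrt (1 + / beta ^ 2 * Rpower r0 (- (2 * (1 + beta) / beta))) in
  (* 1. *)
  ((forall phi, - (PI / 2) < phi < PI / 2 -> phi <> 0 ->
      ex_derive dth phi /\ (forall n : nat, ex_derive_n kappa n phi)) /\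
   (forall phi, - (PI / 2) < phi < PI / 2 -> phi <> 0 ->
      kappa phi <= - c /\ - c < -2 /\ ~ (-2 <= kappa phi <= 0) /\ omega phi < 0)) /\
  (* 2. *)
  (is_lim kappa 0 m_infty /\
   filterlim kappa (at_left (PI / 2)) (locally (- c)) /\
   filterlim kappa (at_right (- (PI / 2))) (locally (- c))) /\
  (* 3. *)
  (exists C delta, 0 < delta /\
     forall phi, 0 < Rabs phi < delta ->
       Rabs (Derive kappa phi) <= C * Rabs (2 + kappa phi) ^ 3) /\
  (* 4. *)
  (exists eps, 0 < eps /\
     ((forall x y, - eps <= x -> x <= y -> y < 0 -> omega x <= omega y) \/
      (forall x y, - eps <= x -> x <= y -> y < 0 -> omega y <= omega x)) /\
     ((forall x y, 0 < x -> x <= y -> y <= eps -> omega x <= omega y) \/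
      (forall x y, 0 < x -> x <= y -> y <= eps -> omega y <= omega x))).
Proof.
  intros r0 dth kappa omega c.
  change c with (cc beta z0). change kappa with (kap beta z0).
  change omega with (omg beta z0). change dth with (dthf beta z0).
  clear r0 dth kappa omega c.
  assert (HPI := PI_RGT_0).
  assert (Hcc := cc_gt2 beta z0 hbeta hz0).
  assert (HdS := dS_pos beta z0 hbeta hz0).
  assert (HdS6 : dS beta z0 <= PI / 6) by apply Rmin_l.
  assert (Hkabs : forall phi, 0 < Rabs phi < PI / 2 -> kap beta z0 phi = kap beta z0 (Rabs phi)).
  { intros phi Hphi. destruct (Rle_or_lt 0 phi) as [H|H].
    - rewrite Rabs_right by lra. reflexivity.
    - rewrite Rabs_left in * by lra. rewrite <- (Ropp_involutive phi) at 1.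
      apply kappa_even; auto. }
  split; [split|split; [split; [|split]|split]].
  -
    intros phi Hphi Hne. destruct (Rle_or_lt 0 phi) as [H|H].
    + assert (Hp : 0 < phi < PI / 2) by lra. split.
      * eexists. apply dth_der_pos; auto.
      * intros n. apply kappa_smooth_pos; auto.
    + assert (Hp : 0 < - phi < PI / 2) by lra. rewrite <- (Ropp_involutive phi). split.
      * eexists. apply dth_der_neg; auto.
      * intros n. apply kappa_smooth_neg; auto.
  -
    intros phi Hphi Hne.
    assert (Ha : 0 < Rabs phi < PI / 2) by (split; [apply Rabs_pos_lt; auto | apply Rabs_def1; lra]).
    assert (Hk : kap beta z0 phi <= - cc beta z0).
    { rewrite Hkabs by auto. apply kappa_le; auto. }
    split; auto. split. lra. split. lra.
    unfold omg, torr_omega. change (torr_kappa beta z0) with (kap beta z0).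
    apply Rdiv_neg_pos. lra. apply cos_gt_0; lra.
  -
    intros P [M HM]. simpl.
    set (K := p beta * J0 / 2).
    assert (HK : 0 < K).
    { unfold K. apply Rdiv_lt_0_compat; [|lra]. apply Rmult_lt_0_compat.
      generalize (p_gt2 beta z0 hbeta hz0); lra. apply (J0_pos beta z0 hbeta hz0). }
    assert (Hd : 0 < Rmin (dS beta z0) (K / (Rabs M + 1))).
    { apply Rmin_pos; auto. apply Rdiv_lt_0_compat; auto. generalize (Rabs_pos M); lra. }
    exists (mkposreal _ Hd). intros x Hx Hx0. apply ball_R in Hx. simpl in Hx.
    rewrite Rminus_0_r in Hx.
    assert (Hx1 := Rmin_l (dS beta z0) (K / (Rabs M + 1))).
    assert (Hx2 := Rmin_r (dS beta z0) (K / (Rabs M + 1))).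
    assert (Hax : 0 < Rabs x) by (apply Rabs_pos_lt; auto).
    apply HM.
    apply Rle_lt_trans with (- K / Rabs x).
    + replace (- K / Rabs x) with (- (p beta * J0 / 2) / Rabs x) by (unfold K; field; lra).
      apply kappa_small_abs; auto. lra.
    + assert (Hlt : Rabs x * (Rabs M + 1) < K).
      { apply Rlt_le_trans with (K / (Rabs M + 1) * (Rabs M + 1)).
        apply Rmult_lt_compat_r. generalize (Rabs_pos M); lra. lra.
        right; field. generalize (Rabs_pos M); lra. }
      assert (K / Rabs x > Rabs M + 1).
      { apply Rmult_lt_reg_r with (Rabs x); auto. unfold Rdiv. rewrite Rmult_assoc, Rinv_l by lra. lra. }
      generalize (Rle_abs (- M)). rewrite Rabs_Ropp. unfold Rdiv in *. lra.
  -
    apply filterlim_locally. intros eps.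
    set (Bn' := Bn beta z0).
    assert (HBn : 0 <= Bn').
    { unfold Bn', Bn. generalize (p_gt2 beta z0 hbeta hz0); intro. apply Rmult_le_pos; [|apply sqrt_pos]. apply Rmult_le_pos; lra. }
    assert (Hd : 0 < Rmin (PI / 2 - PI / 6) (eps / (Bn' + 1))).
    { apply Rmin_pos. lra. apply Rdiv_lt_0_compat. apply cond_pos. lra. }
    exists (mkposreal _ Hd). intros x Hx Hlt. apply ball_R in Hx. simpl in Hx.
    assert (Hx1 := Rmin_l (PI / 2 - PI / 6) (eps / (Bn' + 1))).
    assert (Hx2 := Rmin_r (PI / 2 - PI / 6) (eps / (Bn' + 1))).
    apply Rabs_def2 in Hx.
    change (Rabs (kap beta z0 x - - cc beta z0) < eps).
    replace (kap beta z0 x - - cc beta z0) with (kap beta z0 x + cc beta z0) by ring.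
    assert (Hr : PI / 6 <= Rabs x < PI / 2) by (rewrite Rabs_right; lra).
    apply Rle_lt_trans with (Bn' * (PI / 2 - Rabs x)). apply kappa_near_abs; auto.
    rewrite Rabs_right by lra.
    apply Rle_lt_trans with (Bn' * (eps / (Bn' + 1))). apply Rmult_le_compat_l; lra.
    assert (0 < eps / (Bn' + 1)) by (apply Rdiv_lt_0_compat; [apply cond_pos|lra]).
    replace (Bn' * (eps / (Bn' + 1))) with (eps - eps / (Bn' + 1)) by (field; lra). lra.
  -
    apply filterlim_locally. intros eps.
    set (Bn' := Bn beta z0).
    assert (HBn : 0 <= Bn').
    { unfold Bn', Bn. generalize (p_gt2 beta z0 hbeta hz0); intro. apply Rmult_le_pos; [|apply sqrt_pos]. apply Rmult_le_pos; lra. }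
    assert (Hd : 0 < Rmin (PI / 2 - PI / 6) (eps / (Bn' + 1))).
    { apply Rmin_pos. lra. apply Rdiv_lt_0_compat. apply cond_pos. lra. }
    exists (mkposreal _ Hd). intros x Hx Hlt. apply ball_R in Hx. simpl in Hx.
    assert (Hx1 := Rmin_l (PI / 2 - PI / 6) (eps / (Bn' + 1))).
    assert (Hx2 := Rmin_r (PI / 2 - PI / 6) (eps / (Bn' + 1))).
    apply Rabs_def2 in Hx.
    change (Rabs (kap beta z0 x - - cc beta z0) < eps).
    replace (kap beta z0 x - - cc beta z0) with (kap beta z0 x + cc beta z0) by ring.
    assert (Hr : PI / 6 <= Rabs x < PI / 2) by (rewrite Rabs_left; lra).
    apply Rle_lt_trans with (Bn' * (PI / 2 - Rabs x)). apply kappa_near_abs; auto.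
    rewrite Rabs_left by lra.
    apply Rle_lt_trans with (Bn' * (eps / (Bn' + 1))). apply Rmult_le_compat_l; lra.
    assert (0 < eps / (Bn' + 1)) by (apply Rdiv_lt_0_compat; [apply cond_pos|lra]).
    replace (Bn' * (eps / (Bn' + 1))) with (eps - eps / (Bn' + 1)) by (field; lra). lra.
  -
    exists (C3 beta z0), (dS beta z0). split; auto.
    intros phi Hphi.
    assert (Ha : 0 < Rabs phi <= dS beta z0) by lra.
    destruct (item3_bound beta z0 hbeta hz0 (Rabs phi) Ha) as [H1 H2].
    assert (Ha' : 0 < Rabs phi < PI / 2) by lra.
    rewrite (Hkabs phi Ha').
    destruct (Rle_or_lt 0 phi) as [H|H].
    + assert (Hp : 0 < phi < PI / 2) by (rewrite Rabs_right in Ha'; lra).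
      rewrite (Rabs_right phi) in H1, H2 |- * by lra.
      rewrite (is_derive_unique _ _ _ (kappa_der_pos beta z0 hbeta hz0 phi Hp)).
      rewrite (Rabs_right (kp beta z0 phi)) by lra. exact H2.
    + assert (Hp : 0 < - phi < PI / 2) by (rewrite Rabs_left in Ha'; lra).
      rewrite (Rabs_left phi) in H1, H2 |- * by lra.
      assert (HD := kappa_der_neg beta z0 hbeta hz0 (- phi) Hp).
      rewrite Ropp_involutive in HD.
      rewrite (is_derive_unique _ _ _ HD).
      rewrite Rabs_Ropp. rewrite (Rabs_right (kp beta z0 (- phi))) by lra. exact H2.
  -
    assert (He := eps4_pos beta z0 hbeta hz0).
    assert (HedS : eps4 beta z0 <= dS beta z0) by apply Rmin_l.
    exists (eps4 beta z0). split; auto. split.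
    + right. intros x y Hx Hxy Hy.
      rewrite <- (Ropp_involutive x), <- (Ropp_involutive y).
      rewrite (omega_even beta z0 hbeta hz0 (- x)) by lra.
      rewrite (omega_even beta z0 hbeta hz0 (- y)) by lra.
      apply omega_incr; auto; lra.
    + left. intros x y Hx Hxy Hy. apply omega_incr; auto.
Qed.
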